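(* Let $n\ge2$, let $A\in\mathbb R^{n\times n}$ have $A_{i,i+1}=1$ ($i=1,\dots,n-1$) and all other entries $0$, and $b=(0,\dots,0,1)^T$ with entries $b_i$. Let $F_i,\bar F_i,P_i$ ($i=1,\dots,n$) and $Q$ be symmetric $n\times n$ real matrices, $P_{n+1}=0$, $G,\bar G\in\mathbb R^{n\times n}$ with $i$th rows $G_i,\bar G_i$, and $r\in\mathbb R^{1\times n}$, such that for $i=1,\dots,n$ $$\bar F_i = F_i + P_{i+1} - \mathbf LP_i - b_iQ,\qquad \bar G_i = G_i - 2b^TP_i - b_ir.$$ Then $$P_1 = \mathbf X_0^{-1}\Big(\sum_{i=1}^{n-1}\mathbf X_iF_i + \tfrac12 G - \sum_{i=1}^{n-1}\mathbf X_i\bar F_i - \tfrac12\bar G - \tfrac12 br\Big).$$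
   Context: $\mathbf L:\mathbb R^{n\times n}\to\mathbb R^{n\times n}$ is $\mathbf LP=A^TP+PA$, with $\mathbf L^0P=P$, $\mathbf L^{k+1}=\mathbf L\circ\mathbf L^k$. The linear operator $\mathbf X_0:\mathbb R^{n\times n}\to\mathbb R^{n\times n}$ maps $P$ to the matrix whose $k$th row ($k=1,\dots,n$) is the $n$th row of $\mathbf L^{k-1}P$; for $i\ge1$, $\mathbf X_iP=(A^T)^i\mathbf X_0P$. The paper asserts that $\mathbf X_0$ is invertible, and $\mathbf X_0^{-1}$ denotes its inverse. $br$ is the outer product of the column $b$ and the row $r$. *)

(* Defs.v *)
From HB Require Import structures.
From mathcomp Require Import all_boot all_order all_algebra.
From mathcomp Require Import reals.
Set Implicit Arguments. Unset Strict Implicit. Unset Printing Implicit Defensive.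
Import Order.TTheory GRing.Theory Num.Theory.
Local Open Scope ring_scope.

Section Defs.
Variable R : realType.
Variable n : nat.

Definition shiftA : 'M[R]_n := \matrix_(i, j) (((j : nat) == i.+1)%N)%:R.

(* b = (0,...,0,1)^T ; b_i (1-indexed) is bvec (i-1) 0. *)
Definition bvec : 'cV[R]_n := \col_i (((i : nat) == n.-1)%N)%:R.

Definition Lop (P : 'M[R]_n) : 'M[R]_n := shiftA^T *m P + P *m shiftA.

Definition lastrow (M : 'M[R]_n) : 'rV[R]_n :=
  \row_j (\sum_(i < n | (i : nat) == n.-1) M i j).

(* X_0 P : its k-th row (k = 1..n) is the n-th row of L^{k-1} P
   (0-indexed: row k is the last row of L^k P). *)
Definition X0 (P : 'M[R]_n) : 'M[R]_n :=
  \matrix_(k, j) lastrow (iter k Lop P) 0 j.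

Definition Xop (i : nat) (P : 'M[R]_n) : 'M[R]_n := (shiftA^T) ^+ i *m X0 P.

(* the inverse of the linear operator X_0, via its matrix on vectorized matrices *)
Definition X0inv (M : 'M[R]_n) : 'M[R]_n :=
  vec_mx (mxvec M *m invmx (lin_mx X0)).

End Defs.

(* Main.v *)
Require Import Defs.
From HB Require Import structures.
From mathcomp Require Import all_boot all_order all_algebra.
From mathcomp Require Import reals.
From mathcomp Require Import zify ring lra.
Import Order.TTheory GRing.Theory Num.Theory.
Local Open Scope ring_scope.

Section H.
Variable R : realType.
Variable n : nat.
Local Notation N := n.+1.
Local Notation S := (shiftA R N)^T.

Lemma sum_shift (f : 'I_N -> R) (k : nat) : (k < N)%N ->
  \sum_(l < N) ((k == l.+1)%:R * f l) = if (0 < k)%N then f (inord k.-1) else 0.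
Proof.
move=> hk; case: k hk => [|k] hk /=.
  by rewrite big1 // => l _; rewrite mul0r.
rewrite (bigD1 (inord k)) //= inordK ?eqxx ?mul1r; last by apply: ltnW.
rewrite big1 ?addr0 // => l hl; case: eqP => [[e]|]; last by rewrite mul0r.
by move: hl; rewrite e; case/eqP; apply/val_inj; rewrite /= inordK //; apply: ltnW.
Qed.

Lemma SmulE (M : 'M[R]_N) k j :
  (S *m M) k j = if (0 < k)%N then M (inord k.-1) j else 0.
Proof.
rewrite !mxE -(sum_shift (fun l => M l j)) //.
by apply: eq_bigr => l _; rewrite !mxE.
Qed.

Lemma mulAE (M : 'M[R]_N) k j :
  (M *m shiftA R N) k j = if (0 < j)%N then M k (inord j.-1) else 0.
Proof.
rewrite !mxE -(sum_shift (fun l => M k l)) //.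
by apply: eq_bigr => l _; rewrite !mxE mulrC.
Qed.

Lemma Lop_lin (a : R) (A B : 'M[R]_N) : Lop (a *: A + B) = a *: Lop A + Lop B.
Proof.
rewrite /Lop mulmxDr mulmxDl -scalemxAr -scalemxAl scalerDr.
by rewrite addrACA.
Qed.

Lemma iterL_lin m (a : R) (A B : 'M[R]_N) :
  iter m (@Lop R N) (a *: A + B) = a *: iter m (@Lop R N) A + iter m (@Lop R N) B.
Proof. by elim: m => //= m ->; rewrite Lop_lin. Qed.

Lemma X0E (P : 'M[R]_N) k j : X0 P k j = iter k (@Lop R N) P ord_max j.
Proof.
rewrite !mxE.
rewrite (eq_bigl (fun i : 'I_N => i == ord_max)) ?big_pred1_eq // => i; rewrite -val_eqE.

Qed.

Lemma X0_lin (a : R) (A B : 'M[R]_N) : X0 (a *: A + B) = a *: X0 A + X0 B.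
Proof.
apply/matrixP => k j; rewrite X0E iterL_lin [RHS]mxE; rewrite [in RHS]mxE !X0E.
by rewrite !mxE.
Qed.

Lemma XopE i (P : 'M[R]_N) (k j : 'I_N) :
  Xop i P k j = if (i <= k)%N then X0 P (inord (k - i)) j else 0.
Proof.
elim: i k => [|i IH] k.
  by rewrite /Xop expr0 mul1mx subn0 inord_val.
rewrite /Xop exprS -mulmxA SmulE -/(Xop i P) IH.
case: k => [[|k] hk] //=.
rewrite inordK ?ltnS ?subSS //; exact: ltnW.
Qed.

Lemma LopE (P : 'M[R]_N) i j : Lop P i j =
  (if (0 < i)%N then P (inord i.-1) j else 0) + (if (0 < j)%N then P i (inord j.-1) else 0).
Proof. by rewrite /Lop mxE SmulE mulAE. Qed.

Lemma keyL k : (k <= n)%N -> forall P : 'M[R]_N,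
  (forall i : 'I_N, (n < i + k)%N -> forall j, P i j = 0) ->
  forall j, iter k (@Lop R N) P ord_max j = P (inord (n - k)) j.
Proof.
elim: k => [|k IH] hk P hP j.
  by rewrite /= subn0; congr (P _ j); apply/val_inj; rewrite /= inordK.
rewrite iterSr IH; first last.
- move=> i hi j'; rewrite LopE.
  case: ifP => [h0|_]; last rewrite add0r.
    rewrite hP ?add0r; last by rewrite inordK; [lia| case: i hi h0 => /= i; lia].
    by case: ifP => // _; rewrite hP //; lia.
  by case: ifP => // _; rewrite hP //; lia.
- exact: ltnW.
rewrite LopE inordK; last lia.
have -> : (0 < n - k)%N by lia.
case: ifP => _; last by rewrite addr0; congr (P _ j); apply/val_inj; rewrite /= !inordK; lia.
rewrite (hP (inord (n - k))) ?addr0; last by rewrite inordK; lia.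
by congr (P _ j); apply/val_inj; rewrite /= !inordK; lia.
Qed.

Lemma X0_inj (P : 'M[R]_N) : X0 P = 0 -> P = 0.
Proof.
move=> h0.
have claim : forall k, (k <= N)%N -> forall i : 'I_N, (n < i + k)%N -> forall j, P i j = 0.
  elim=> [|k IH] hk i hi j.
    by move: (ltn_ord i); lia.
  have [lt|ge] := ltnP n (i + k); first by apply: IH => //; lia.
  have ei : i = inord (n - k) :> 'I_N by apply/val_inj; rewrite /= inordK; lia.
  rewrite ei -keyL; last by move=> i' hi' j'; apply: IH => //; lia.
    have e := X0E P (inord k) j; rewrite inordK in e; last lia.
    by rewrite -e h0 mxE.
  lia.
apply/matrixP => i j; rewrite mxE; apply: (claim N) => //; lia.
Qed.
Lemma X0_linear : linear (@X0 R N).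
Proof. by move=> a A B; rewrite X0_lin. Qed.
HB.instance Definition _ := GRing.isLinear.Build R 'M[R]_N 'M[R]_N *:%R (@X0 R N) X0_linear.

Lemma X0invK (P : 'M[R]_N) : X0inv (X0 P) = P.
Proof.
have hu : lin_mx (@X0 R N) \in unitmx.
  rewrite -row_free_unit; apply: inj_row_free => v hv.
  have : mxvec (X0 (vec_mx v)) = 0 by rewrite -(mul_vec_lin (@X0 R N)) vec_mxK.
  move/(congr1 vec_mx); rewrite mxvecK linear0 => /X0_inj h.
  by rewrite -(vec_mxK v) h linear0.
rewrite /X0inv -(mul_vec_lin (@X0 R N)) mulmxK //.
exact: mxvecK.
Qed.
Lemma sum_last (f : 'I_N -> R) : \sum_(i < N) ((i : nat) == n)%:R * f i = f ord_max.
Proof.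
rewrite (bigD1 ord_max) //= eqxx mul1r big1 ?addr0 // => i hi.
suff -> : ((i : nat) == n) = false by rewrite mul0r.
by apply/negbTE; apply: contra hi => /eqP e; apply/eqP/val_inj.
Qed.

Lemma main_lemma (F Fb P : nat -> 'M[R]_N) (G Gb : 'M[R]_N) (Q : 'M[R]_N) (r : 'rV[R]_N)
  (hFeq : forall k : 'I_N,
     Fb k.+1 = F k.+1 + P k.+2 - Lop (P k.+1) - bvec R N k 0 *: Q)
  (hGeq : forall k : 'I_N,
     row k Gb = row k G - 2 *: ((bvec R N)^T *m P k.+1) - bvec R N k 0 *: r) :
  P 1%N = X0inv
    (\sum_(1 <= i < N) Xop i (F i) + 2^-1 *: G
     - \sum_(1 <= i < N) Xop i (Fb i) - 2^-1 *: Gb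
     - 2^-1 *: (bvec R N *m r)).
Proof.
rewrite -[P 1%N]X0invK; congr X0inv; apply/matrixP => k j.
have hG : G k j - Gb k j - (bvec R N *m r) k j = 2 * P k.+1 ord_max j.
  have := congr1 (fun M : 'rV_N => M 0 j) (hGeq k); rewrite /= !mxE.
  rewrite big_ord1.
  under eq_bigr do rewrite !mxE.
  rewrite sum_last => ->; rewrite !mxE; lra.
have hS : \sum_(1 <= i < N) Xop i (F i) k j - \sum_(1 <= i < N) Xop i (Fb i) k j
          = X0 (P 1%N) k j - P k.+1 ord_max j.
  have hk := ltn_ord k.
  rewrite -sumrB (big_cat_nat _ (n:=k.+1)) //=.
  rewrite [\sum_(k.+1 <= i < N) _]big_nat_cond [\sum_(k.+1 <= i < N | _) _]big1 ?addr0; last first.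
    by move=> i /andP[/andP[hi _] _]; rewrite !XopE leqNgt hi subrr.
  pose h i := iter (k.+1 - i) (@Lop R N) (P i) ord_max j.
  rewrite (telescope_sumr_eq (fun i => - h i)) //; last first.
    move=> i /andP[h1 h2].
    rewrite !XopE -ltnS h2.
    have hi : (i.-1 < N)%N by lia.
    have := hFeq (Ordinal hi) => /=; rewrite prednK //= => ->.
    rewrite [bvec _ _ _ _]mxE /=.
    have -> : (i.-1 == n) = false by apply/negbTE; lia.
    rewrite scale0r subr0 !raddfB raddfD /=.
    move: (X0E (F i) (inord (k-i)) j) (X0E (P i.+1) (inord (k-i)) j) (X0E (Lop (P i)) (inord (k-i)) j).
    set u1 := X0 (F i); set u2 := X0 (P i.+1); set u3 := X0 (Lop (P i)).
    clearbody u1 u2 u3; rewrite !mxE => -> -> ->; rewrite inordK; last lia.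
    have e1 : (k.+1 - i = (k-i).+1)%N by lia.
    have e2 : (k.+1 - i.+1 = k - i)%N by lia.
    rewrite -iterSr /h e1 e2; lra.
  rewrite /h subn1 /= subnn /= X0E; lra.
rewrite -!summxE in hS.
set a := \sum_(1 <= i < N) _ in hS *. set b := \sum_(1 <= i < N) _ in hS *.
set x := X0 _ in hS *.
rewrite ![in RHS]mxE; rewrite mxE in hG.
lra.
Qed.
End H.
(* Families F_i, Fbar_i, P_i are indexed by nat (1-indexed as in the paper);
   k : 'I_n corresponds to i = k+1. Rows of G, Gbar are 0-indexed. *)
Theorem theorem3p6 (R : realType) (n : nat) (hn : (2 <= n)%N)
  (F Fb P : nat -> 'M[R]_n) (Q G Gb : 'M[R]_n) (r : 'rV[R]_n)
  (hF : forall k : 'I_n, (F k.+1)^T = F k.+1)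
  (hFb : forall k : 'I_n, (Fb k.+1)^T = Fb k.+1)
  (hP : forall k : 'I_n, (P k.+1)^T = P k.+1)
  (hQ : Q^T = Q)
  (hPn : P n.+1 = 0)
  (hFeq : forall k : 'I_n,
     Fb k.+1 = F k.+1 + P k.+2 - Lop (P k.+1) - bvec R n k 0 *: Q)
  (hGeq : forall k : 'I_n,
     row k Gb = row k G - 2 *: ((bvec R n)^T *m P k.+1) - bvec R n k 0 *: r) :
  P 1%N = X0inv
    (\sum_(1 <= i < n) Xop i (F i) + 2^-1 *: G
     - \sum_(1 <= i < n) Xop i (Fb i) - 2^-1 *: Gb
     - 2^-1 *: (bvec R n *m r)).
Proof.
destruct n as [|n]; first by [].
exact: main_lemma.
Qed.
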